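(* Let $f:\mathbb{R}^n\to\mathbb{R}$ be locally Lipschitz continuous at $\bar x$ with local Lipschitz modulus $0$, i.e. $\limsup_{x,x'\to\bar x,\,x\ne x'}|f(x)-f(x')|/\|x-x'\|=0$. Then $\mathrm{epi}\, f=\{(x,t):t\ge f(x)\}$ is smoothly approximately convex at $(\bar x,\bar s)$ for every $\bar s\ge f(\bar x)$.
   Context: A set $C\subseteq\mathbb{R}^N$ is smoothly approximately convex at $\bar z\in C$ if for every $\epsilon>0$ there is a neighborhood $W$ of $\bar z$ such that for all $z,z'\in C\cap W$ there is a map $\gamma:[0,1]\to C$, extending to a $\mathcal{C}^{(1)}$ map on an open neighborhood of $[0,1]$, with $\gamma(0)=z,\gamma(1)=z'$ and $\|\gamma'(t)-(z'-z)\|\le\epsilon\|z'-z\|$ for all $t\in[0,1]$. *)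

(* Defs.v *)
From HB Require Import structures.
From mathcomp Require Import all_boot all_order all_algebra.
From mathcomp Require Import all_classical all_reals all_analysis.
Set Implicit Arguments. Unset Strict Implicit. Unset Printing Implicit Defensive.
Import Order.TTheory GRing.Theory Num.Theory.
Import numFieldNormedType.Exports.
Local Open Scope classical_set_scope.
Local Open Scope ring_scope.

Definition smoothly_approx_convex (R : realType) (V : normedModType R)
    (C : set V) (zbar : V) : Prop :=
  C zbar /\
  forall eps : R, 0 < eps ->
  exists W : set V, nbhs zbar W /\
  forall z z' : V, C z -> W z -> C z' -> W z' ->
  exists gamma : R -> V,
    (* gamma (restricted to [0,1]) extends to a C^1 map on an open nbhd U of [0,1] *)
    (exists U : set R, open U /\ `[0, 1]%classic `<=` U /\
        (forall t, U t -> derivable gamma t 1) /\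
        (forall t, U t -> {for t, continuous (fun s => 'D_1 gamma s)})) /\
    (forall t, `[0, 1]%classic t -> C (gamma t)) /\
    gamma 0 = z /\ gamma 1 = z' /\
    (forall t, `[0, 1]%classic t -> `|'D_1 gamma t - (z' - z)| <= eps * `|z' - z|).

Definition lip_modulus_zero (R : realType) (n : nat)
    (f : 'rV[R]_n -> R) (xbar : 'rV[R]_n) : Prop :=
  forall e : R, 0 < e -> exists d : R, 0 < d /\
  forall x x' : 'rV[R]_n, `|x - xbar| < d -> `|x' - xbar| < d ->
    `|f x - f x'| <= e * `|x - x'|.

Definition epi (R : realType) (n : nat) (f : 'rV[R]_n -> R)
  : set ('rV[R]_n * R^o)%type :=
  [set p | f p.1 <= p.2].

(* Main.v *)
Require Import Defs.
From HB Require Import structures.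
From mathcomp Require Import all_boot all_order all_algebra.
From mathcomp Require Import all_classical all_reals all_analysis.
From mathcomp Require Import ring lra.
Import Order.TTheory GRing.Theory Num.Theory.
Import numFieldNormedType.Exports.
Local Open Scope classical_set_scope.
Local Open Scope ring_scope.

Lemma is_derive_scal (R : realType) (V : normedModType R) (g : R -> R) (w : V) (t dg : R) :
  is_derive t 1 g dg -> is_derive t 1 (fun s => g s *: w) (dg *: w).
Proof.
move=> [dg1 dgv].
have H : (fun h : R => h^-1 *: ((fun s => g s *: w) (h *: 1 + t) - g t *: w))
   = (fun h : R => (h^-1 *: (g (h *: 1 + t) - g t)) *: w).
  by apply/funext => h /=; rewrite -scalerBl scalerA.
have C : (fun h : R => h^-1 *: ((fun s => g s *: w) (h *: 1 + t) - g t *: w)) @ 0^' --> dg *: w.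
  rewrite H; apply: cvgZr_tmp; rewrite -dgv; exact: dg1.
apply: DeriveDef; first by apply/cvg_ex; exists (dg *: w).
exact: cvg_lim C.
Qed.

Section S.
Variables (R : realType) (n : nat).
Let V := ('rV[R]_n * R^o)%type.
Lemma gam_der (z a b : V) (t : R) :
  is_derive t 1 (fun s : R => z + s *: a - (s * s) *: b) (a - (t + t) *: b).
Proof.
have h1 := (@is_derive_scal _ _ _ a _ _) (is_derive_id t 1).
have h2 := (@is_derive_scal _ _ _ b _ _) (is_deriveM (is_derive_id t 1) (is_derive_id t 1)).
have h3 := is_deriveB (is_deriveD (is_derive_cst z t 1) h1) h2.
apply: is_derive_eq.
by rewrite add0r scale1r [t%:A]mulr1.
Qed.
End S.

Lemma pairE (R : realType) (n : nat) (p q : ('rV[R]_n * R^o)%type) : p.1 = q.1 -> p.2 = q.2 -> p = q.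
Proof. by case: p q => [? ?] [? ?] /= -> ->. Qed.

Theorem proposition3p4 (R : realType) (n : nat) (f : 'rV[R]_n -> R)
  (xbar : 'rV[R]_n) :
  lip_modulus_zero f xbar ->
  forall sbar : R, f xbar <= sbar ->
  smoothly_approx_convex (epi f) ((xbar, sbar) : ('rV[R]_n * R^o)%type).
Proof.
move=> Hlip sbar Hs; split; first by [].
move=> eps eps0.
have e0 : 0 < eps / 2 by rewrite divr_gt0.
have [d [d0 Hd]] := Hlip (eps / 2) e0.
exists (ball ((xbar, sbar) : ('rV[R]_n * R^o)%type) d); split; first exact: nbhsx_ballx.
have Wp : forall p : ('rV[R]_n * R^o)%type, ball ((xbar, sbar) : ('rV[R]_n * R^o)%type) d p ->
    `|p.1 - xbar| < d.
  move=> p; rewrite -ball_normE /ball_ /= prod_normE gt_max => /andP[h _].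
  by rewrite distrC.
move=> [x s] [x' s'] Hz Wz Hz' Wz'.
have hx := Wp _ Wz; have hx' := Wp _ Wz'; simpl in hx, hx'.
rewrite /epi /= in Hz Hz'.
set L := `|x' - x|.
set c := eps * L.
pose a : ('rV[R]_n * R^o)%type := (x' - x, s' - s + c).
pose b : ('rV[R]_n * R^o)%type := (0, c).
exists (fun t : R => (x, s) + t *: a - (t * t) *: b).
have GD := @gam_der R n ((x, s) : ('rV[R]_n * R^o)%type) a b.
have DE : forall t, 'D_1 (fun t : R => ((x, s) : ('rV[R]_n * R^o)%type) + t *: a - (t * t) *: b) t
   = a - (t + t) *: b.
  by move=> t; exact: (@derive_val _ _ _ _ _ _ _ (GD t)).
split.
  exists setT; split; first exact: openT.
  split; first by [].
  split; first by move=> t _; exact: (@ex_derive _ _ _ _ _ _ _ (GD t)).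
  move=> t _.
  have -> : (fun u => 'D_1 (fun t : R => ((x, s) : ('rV[R]_n * R^o)%type) + t *: a - (t * t) *: b) u) = fun u => a - (u + u) *: b.
    by apply/funext => u; exact: DE.
  apply: cvgB; first exact: cvg_cst.
  apply: cvgZr_tmp; apply: cvgD; exact: cvg_id.
split.
  move=> t /=; rewrite in_itv /= => /andP[t0 t1].
  rewrite /epi /= scaler0 subr0.
  change (f (x + t *: (x' - x)) <= s + t * (s' - s + c) - (t * t) * c).
  set xt := x + t *: (x' - x).
  have cvx : forall v w : 'rV[R]_n, (1 - t) *: v + t *: w = v + t *: (w - v).
    by move=> v w; rewrite scalerBl scale1r scalerBr addrA addrAC.
  have hxt : `|xt - xbar| < d.
    have -> : xt - xbar = (1 - t) *: (x - xbar) + t *: (x' - xbar).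
      by rewrite cvx opprB addrA subrK /xt addrAC.
    apply: le_lt_trans (ler_normD _ _) _.
    rewrite !normrZ (ger0_norm t0) ger0_norm ?subr_ge0 //.
    set m := Num.max `|x - xbar| `|x' - xbar|.
    have m1 : `|x - xbar| <= m by rewrite le_max lexx.
    have m2 : `|x' - xbar| <= m by rewrite le_max lexx orbT.
    have md : m < d by rewrite gt_max hx hx'.
    have t1' : 0 <= 1 - t by rewrite subr_ge0.
    have := ler_wpM2l t1' m1.
    have := ler_wpM2l t0 m2.
    lra.
  have A := ler_normlW (Hd _ _ hxt hx).
  have B := ler_normlW (Hd _ _ hxt hx').
  have E1 : xt - x = t *: (x' - x) by rewrite /xt addrAC subrr add0r.
  have E2 : xt - x' = (t - 1) *: (x' - x).
    by rewrite /xt addrAC addrC -(opprB x' x) scalerBl scale1r.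
  rewrite E1 normrZ (ger0_norm t0) -/L in A.
  rewrite E2 normrZ (ler0_norm (_ : t - 1 <= 0)) -/L in B; last by rewrite subr_le0.
  have t1' : 0 <= 1 - t by rewrite subr_ge0.
  have A' := ler_wpM2l t1' A.
  have B' := ler_wpM2l t0 B.
  have C1 := ler_wpM2l t1' Hz.
  have C2 := ler_wpM2l t0 Hz'.
  rewrite /c.
  lra.
split.
  by apply: pairE; rewrite /= !scale0r mul0r scale0r ?subr0 ?addr0.
split.
  apply: pairE; rewrite /= ?scale1r ?mul1r ?scale1r ?subr0.
    by rewrite addrC subrK.
  by rewrite addrA addrK addrC subrK.
move=> t /=; rewrite in_itv /= => /andP[t0 t1].
rewrite DE.
have -> : a - (t + t) *: b - ((x', s') - (x, s)) = ((0 : 'rV[R]_n), (1 - (t + t)) * c) :> ('rV[R]_n * R^o)%type.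
  apply: pairE; rewrite /=.
    by rewrite scaler0 subr0 subrr.
  change (s' - s + c - (t + t) * c - (s' - s) = (1 - (t + t)) * c).
  lra.
rewrite !prod_normE /= normr0 ge_max mulr_ge0 ?le_max ?normr_ge0 ?(ltW eps0) //=.
have c0 : 0 <= c by rewrite mulr_ge0 ?normr_ge0 ?(ltW eps0).
have H1 : `|1 - (t + t)| <= 1 by rewrite ler_norml; apply/andP; split; lra.
rewrite normrM (ger0_norm c0).
apply: le_trans (ler_wpM2r c0 H1) _.
rewrite mul1r /c ler_wpM2l ?(ltW eps0) //.
by rewrite le_max lexx.
Qed.
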